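(* For $n\in\mathbb N$, $$\Phi^*_n(-1)=\begin{cases}-2 & n=1,\\ 0 & n=2^a,\ a\ge1,\\ p^b & n=2^ap^b \text{ with } p \text{ an odd prime},\ a,b\ge1,\\ 1 & \text{otherwise}.\end{cases}$$
   Context: $d\mid\mid n$ means $d\mid n$ and $\gcd(d,n/d)=1$; $(j,n)_*=\max\{d: d\mid j,\ d\mid\mid n\}$; $\Phi^*_n(x)=\prod_{1\le j\le n,\ (j,n)_*=1}(x-e^{2\pi i j/n})$. *)

(* Defs.v *)
From HB Require Import structures.
From mathcomp Require Import all_boot all_order all_algebra all_field.
Set Implicit Arguments. Unset Strict Implicit. Unset Printing Implicit Defensive.
Import Order.TTheory GRing.Theory Num.Theory.

Definition udvdn (d n : nat) : bool := (d %| n) && coprime d (n %/ d).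

(* (j,n)_* = max { d : d | j, d || n }  (for n > 0 every such d is <= n). *)
Definition ugcdn (j n : nat) : nat :=
  \max_(d < n.+1 | (d %| j) && udvdn d n) (nat_of_ord d).

(* zeta n = e^{2 pi i / n} in algC: n.-root (-1) is e^{i pi / n}
   (the n-th root of -1 of minimal nonnegative argument). *)
Definition zeta (n : nat) : algC := ((n.-root (-1)) ^+ 2)%R.

Local Open Scope ring_scope.

Definition uPhi (n : nat) : {poly algC} :=
  \prod_(1 <= j < n.+1 | ugcdn j n == 1%N) ('X - (zeta n ^+ j)%:P).

(* Main.v *)
Require Import Defs.
From HB Require Import structures.
From mathcomp Require Import all_boot all_order all_algebra all_field.
From mathcomp.algebra_tactics Require Import lra ring.
From mathcomp Require Import zify.
From Stdlib Require Import Lia.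
Import Order.TTheory GRing.Theory Num.Theory.
Local Open Scope ring_scope.
Set Implicit Arguments. Unset Strict Implicit.

Section Real.
Variable R : realFieldType.

Lemma semi_le (a1 a2 b1 b2 : R) : a1^+2 + a2^+2 = 1 -> b1^+2+b2^+2 = 1 ->
  0 <= a2 -> 0 <= b2 -> 0 <= a1 -> a1 <= b1 -> b2 <= a2.
Proof. move=> *; nra. Qed.
Lemma semi_le' (a1 a2 b1 b2 : R) : a1^+2 + a2^+2 = 1 -> b1^+2+b2^+2 = 1 ->
  0 <= a2 -> 0 <= b2 -> b1 <= 0 -> a1 <= b1 -> a2 <= b2.
Proof. move=> *; nra. Qed.

Lemma sq1 (x : R) : x ^+ 2 = 1 -> x = 1 \/ x = -1.
Proof.
move=> h; have : (x - 1) * (x + 1) = 0.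
  by rewrite (_ : (x - 1) * (x + 1) = x ^+ 2 - 1); [rewrite h subrr|ring].
by move/eqP; rewrite mulf_eq0 => /orP[]/eqP h'; [left|right]; lra.
Qed.

Lemma R1 (a1 a2 b1 b2 x1 x2 : R) :
  a1^+2 + a2^+2 = 1 -> b1^+2+b2^+2 = 1 -> x1^+2+x2^+2 = 1 ->
  0 <= a2 -> 0 <= b2 -> 0 <= x2 -> -1 < x1 -> a1 <= b1 -> 0 <= a1*x2 + a2*x1 ->
  0 <= b1*x2 + b2*x1.
Proof.
move=> ha hb hx a2p b2p x2p x1m ab hI.
have [x1p|x1n] := lerP 0 x1.
  have [b1p|b1n] := lerP 0 b1; first nra.
  have := semi_le' ha hb a2p b2p (ltW b1n) ab; nra.
have x2q : 0 < x2 by nra.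
have a1p : 0 <= a1 by nra.
have := semi_le ha hb a2p b2p a1p ab; nra.
Qed.

Lemma R2 (a1 a2 b1 b2 x1 x2 : R) :
  a1^+2 + a2^+2 = 1 -> b1^+2+b2^+2 = 1 -> x1^+2+x2^+2 = 1 ->
  0 <= a2 -> 0 <= b2 -> 0 <= x2 -> -1 < x1 -> a1 <= b1 -> 0 <= a1*x2 + a2*x1 ->
  a1*x1 - a2*x2 <= b1*x1 - b2*x2.
Proof.
move=> ha hb hx a2p b2p x2p x1m ab hI.
have hI2 := R1 ha hb hx a2p b2p x2p x1m ab hI.
have id : (a2 + b2) * ((b1*x1 - b2*x2) - (a1*x1 - a2*x2)) =
          (b1 - a1) * ((a1*x2 + a2*x1) + (b1*x2 + b2*x1)).
  have e : b1^+2 - a1^+2 = a2^+2 - b2^+2 by lra.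
  transitivity ((a2+b2)*(b1-a1)*x1 + (a2^+2 - b2^+2)*x2); first by ring.
  rewrite -e; ring.
have [s0|spos] := eqVneq (a2 + b2) 0.
  have a20 : a2 = 0 by lra.
  have b20 : b2 = 0 by lra.
  subst. have [a1e|a1e] : a1 = 1 \/ a1 = -1 by apply: sq1; lra.
    have [b1e|b1e] : b1 = 1 \/ b1 = -1 by apply: sq1; lra.
      subst; lra.
    lra.
  have [b1e|b1e] : b1 = 1 \/ b1 = -1 by apply: sq1; lra.
    subst. have x20 : x2 = 0 by lra.
    subst. have [x1e|x1e] : x1 = 1 \/ x1 = -1 by apply: sq1; lra.
      by subst; lra.
    by subst; lra.
  by subst; lra.
have sp : 0 < a2 + b2 by rewrite lt_def spos /=; lra.
have : 0 <= (a2 + b2) * ((b1*x1 - b2*x2) - (a1*x1 - a2*x2)) by rewrite id; nra.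
rewrite pmulr_rge0 //; lra.
Qed.

Lemma L1s (a1 a2 x1 x2 : R) :
  a1^+2 + a2^+2 = 1 -> x1^+2+x2^+2 = 1 -> 0 <= a2 -> 0 < x2 ->
  0 <= a1*x2 + a2*x1 -> a1*x1 - a2*x2 < a1.
Proof.
move=> ha hx a2p x2p hI.
have id : (a1 - (a1*x1 - a2*x2)) * x2 = (1 - x1) * (a1*x2 + a2*x1 + a2).
  have e : x2 ^+ 2 = 1 - x1 ^+ 2 by lra.
  transitivity (a1*x2 - a1*x1*x2 + a2 * x2^+2); first by ring.
  rewrite e; ring.
have x1l : 0 < 1 - x1 by nra.
have hs : 0 < a1*x2 + a2*x1 + a2.
  rewrite lt_def; apply/andP; split; last lra.
  apply/eqP=> h0.
  have a20 : a2 = 0 by lra.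
  subst; have : a1 * x2 = 0 by lra.
  move/eqP; rewrite mulf_eq0 => /orP[]/eqP h'; [subst|]; lra.
have : 0 < (a1 - (a1*x1 - a2*x2)) * x2 by rewrite id; apply: mulr_gt0.
rewrite pmulr_lgt0 //; lra.
Qed.

Lemma W1 (b1 b2 y1 y2 : R) :
  b1^+2 + b2^+2 = 1 -> y1^+2+y2^+2 = 1 -> 0 <= b2 -> 0 < y2 ->
  b1*y2 + b2*y1 < 0 -> b1 + y1 < 0.
Proof.
move=> hb hy b2p y2p hI; rewrite ltNge; apply/negP=> hs.
have [b1p|b1n] := lerP 0 b1.
  have [y1p|y1n] := lerP 0 y1; first nra.
  have : b2 <= y2 by nra.
  nra.
have : y2 <= b2 by nra.
nra.
Qed.

Lemma W2 (b1 b2 y1 y2 : R) :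
  b1^+2 + b2^+2 = 1 -> y1^+2+y2^+2 = 1 -> 0 <= b2 -> 0 < y2 ->
  b1*y2 + b2*y1 < 0 -> b1 != -1 -> b2 * y2 - b1 * y1 > y1.
Proof.
move=> hb hy b2p y2p hI bn1.
have w1 := W1 hb hy b2p y2p hI.
have b2q : 0 < b2.
  rewrite lt_def b2p andbT; apply/eqP=> b20; subst.
  have [e|e] : b1 = 1 \/ b1 = -1 by apply: sq1; lra.
  subst; lra. by rewrite e eqxx in bn1.
have [y1n|y1p] := lerP y1 0; first nra.
have w1l : -b1 < 1 by nra.
have w2l : b2 < y2 by nra.
nra.
Qed.

Lemma re_gt_m1 (x1 x2 : R) : x1^+2 + x2^+2 = 1 -> 0 < x2 -> -1 < x1.
Proof. move=> *; nra. Qed.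
Lemma re_le1 (x1 x2 : R) : x1^+2 + x2^+2 = 1 -> -1 <= x1 /\ x1 <= 1.
Proof. move=> *; split; nra. Qed.
Lemma re_le_m1 (x1 x2 : R) : x1^+2 + x2^+2 = 1 -> x1 <= -1 -> x1 = -1 /\ x2 = 0.
Proof.
move=> h l; have e : x1 = -1 by nra.
split=> //; subst; have : x2 ^+ 2 = 0 by lra.
by move/eqP; rewrite expf_eq0 /= => /eqP.
Qed.
Lemma im_pm (x1 x2 y2 : R) : x1^+2 + x2^+2 = 1 -> x1^+2 + y2^+2 = 1 ->
  x2 = y2 \/ x2 = - y2.
Proof.
move=> h1 h2; have : (x2 - y2) * (x2 + y2) = 0.
  by rewrite (_ : (x2 - y2) * (x2 + y2) = x2^+2 - y2^+2); [lra|ring].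
by move/eqP; rewrite mulf_eq0 => /orP[]/eqP h; [left|right]; lra.
Qed.
End Real.

Definition RE (z : algC) : algR := in_algR (Creal_Re z).
Definition IM (z : algC) : algR := in_algR (Creal_Im z).

Lemma unitR (z : algC) : `|z| = 1 -> RE z ^+ 2 + IM z ^+ 2 = 1.
Proof.
move=> h; apply: val_inj => /=.
by rewrite -!expr2 -normC2_Re_Im h expr1n.
Qed.

Lemma ImM2 (x y : algC) : 'Im (x * y) = 'Re x * 'Im y + 'Im x * 'Re y.
Proof. by rewrite ImM [_ * 'Im x]mulrC. Qed.

Lemma CR12 (a b x : algC) : `|a| = 1 -> `|b| = 1 -> `|x| = 1 ->
  0 <= 'Im a -> 0 <= 'Im b -> 0 <= 'Im x -> -1 < 'Re x -> 'Re a <= 'Re b ->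
  0 <= 'Im (a * x) -> 0 <= 'Im (b * x) /\ 'Re (a*x) <= 'Re (b*x).
Proof.
move=> /unitR ha /unitR hb /unitR hx a2 b2 x2 x1 ab; rewrite !ReM !ImM2 => hI.
split.
  exact (R1 ha hb hx a2 b2 x2 x1 ab hI).
exact (R2 ha hb hx a2 b2 x2 x1 ab hI).
Qed.

Lemma CL1s (a x : algC) : `|a| = 1 -> `|x| = 1 ->
  0 <= 'Im a -> 0 < 'Im x -> 0 <= 'Im (a * x) -> 'Re (a * x) < 'Re a.
Proof.
move=> /unitR ha /unitR hx a2 x2; rewrite ReM ImM2 => hI.
exact (L1s ha hx a2 x2 hI).
Qed.

Lemma Re_gt_m1 (x : algC) : `|x| = 1 -> 0 < 'Im x -> -1 < 'Re x.
Proof. move=> /unitR hx x2; exact (re_gt_m1 hx x2). Qed.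

Lemma Re_bounds (x : algC) : `|x| = 1 -> -1 <= 'Re x /\ 'Re x <= 1.
Proof. move=> /unitR hx; exact (re_le1 hx). Qed.

Lemma Re_le_m1 (x : algC) : `|x| = 1 -> 'Re x <= -1 -> x = -1.
Proof.
move=> /unitR hx l; have [e1 e2] := re_le_m1 hx l.
have e1' : 'Re x = -1 by exact (congr1 val e1).
have e2' : 'Im x = 0 by exact (congr1 val e2).
by rewrite [x]Crect e1' e2' mulr0 addr0.
Qed.

Lemma Re_gt_m1' (x : algC) : `|x| = 1 -> x != -1 -> -1 < 'Re x.
Proof.
move=> hx xn; rewrite real_ltNge ?rpredN1 ?Creal_Re //; apply/negP => l.
by move/eqP: xn; apply; exact: Re_le_m1.
Qed.

Lemma CW (b y : algC) : `|b| = 1 -> `|y| = 1 -> 0 <= 'Im b -> 0 < 'Im y ->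
  'Im (b * y) < 0 -> b != -1 -> 'Re y < - 'Re b /\ 'Re y < - 'Re (b * y).
Proof.
move=> hb' /unitR hy b2 y2; rewrite ReM ImM2 => hI bn.
have hb := unitR hb'.
have bn' : RE b != -1.
  apply/eqP=> e; move/negP: bn; apply; apply/eqP; apply: Re_le_m1 => //.
  have e' : 'Re b = -1 by exact (congr1 val e).
  by rewrite e'.
split.
  have := W1 hb hy b2 y2 hI; rewrite -ltrBrDl sub0r; exact.
have := W2 hb hy b2 y2 hI bn' => h.
rewrite opprB; exact h.
Qed.

Lemma CR12' (a b x : algC) : `|a| = 1 -> `|b| = 1 -> `|x| = 1 ->
  0 <= 'Im a -> 0 <= 'Im b -> 0 <= 'Im x -> -1 < 'Re x -> 'Re a <= 'Re b ->
  0 <= 'Im (a * x) -> 0 <= 'Im (b * x) /\ 'Re (a*x) <= 'Re (b*x).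
Proof. exact: CR12. Qed.

Lemma CPM (a b x z : algC) : `|a| = 1 -> `|b| = 1 -> `|x| = 1 -> `|z| = 1 ->
  0 <= 'Im a -> 0 <= 'Im b -> 0 <= 'Im x -> 0 <= 'Im z ->
  -1 < 'Re x -> -1 < 'Re b -> 'Re a <= 'Re b -> 'Re x <= 'Re z ->
  0 <= 'Im (a * x) -> 'Re (a * x) <= 'Re (b * z).
Proof.
move=> ha hb hx hz a2 b2 x2 z2 x1 b1 ab xz hI.
have [hI' l1] := CR12 ha hb hx a2 b2 x2 x1 ab hI.
have hI2 : 0 <= 'Im (x * b) by rewrite mulrC.
have [_ l2] := CR12 hx hz hb x2 z2 b2 b1 xz hI2.
by apply: (le_trans l1); rewrite mulrC [b * z]mulrC.
Qed.

Lemma unit_eq_or_conj (z w : algC) : `|z| = 1 -> `|w| = 1 -> 'Re z = 'Re w ->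
  z = w \/ z = w^*.
Proof.
move=> /unitR hz /unitR hw e.
have e' : RE z = RE w by apply: val_inj.
rewrite e' in hz.
have [h|h] := im_pm hz hw.
  have h' : 'Im z = 'Im w by exact (congr1 val h).
  by left; rewrite [z]Crect [w]Crect e h'.
have h' : 'Im z = - 'Im w by exact (congr1 val h).
by right; rewrite [z]Crect [w^*]Crect Re_conj Im_conj e h'.
Qed.

Fixpoint tch2 (k : nat) : {poly algR} * {poly algR} :=
  match k with
  | 0 => (1, 'X)
  | k'.+1 => let: (a, b) := tch2 k' in (b, 'X * b *+ 2 - a)
  end.
Definition Tch k := (tch2 k).1.

Lemma Re_rec (u : algC) k : `|u| = 1 ->
  'Re (u ^+ k.+2) = 'Re u * 'Re (u ^+ k.+1) *+ 2 - 'Re (u ^+ k).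
Proof.
move=> hu.
have uu : u * u^* = 1 by rewrite -normCK hu expr1n.
have e1 : u ^+ k.+2 = u ^+ k.+1 * u by rewrite exprSr.
have e2 : u ^+ k = u ^+ k.+1 * u^* by rewrite exprSr -mulrA uu mulr1.
rewrite e1 e2 !ReM Re_conj Im_conj.
rewrite mulrN opprK mulr2n; ring.
Qed.

Lemma tch_val (u : algC) k : `|u| = 1 ->
  algRval ((Tch k).[RE u]) = 'Re (u ^+ k).
Proof.
move=> hu; rewrite /Tch.
suff : algRval ((tch2 k).1.[RE u]) = 'Re (u ^+ k) /\
       algRval ((tch2 k).2.[RE u]) = 'Re (u ^+ k.+1) by case.
elim: k => [|k [IH1 IH2]] /=.
  split; last by rewrite hornerX expr1.
  by rewrite hornerC expr0; apply/esym/Creal_ReP; exact: rpred1.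
case: (tch2 k) IH1 IH2 => a b /= IH1 IH2; split=> //.
rewrite hornerD hornerN hornerMn hornerM hornerX.
rewrite rmorphB rmorphMn rmorphM /= IH2 IH1.
by rewrite Re_rec.
Qed.

Lemma RE_val (z : algC) : algRval (RE z) = 'Re z. Proof. by []. Qed.

Lemma norm1_sq (v : algC) : 'Re v ^+ 2 + 'Im v ^+ 2 = 1 -> `|v| = 1.
Proof.
move=> h; have : `|v| ^+ 2 = 1 by rewrite normC2_Re_Im.
by move/eqP; rewrite sqrp_eq1 ?normr_ge0 // => /eqP.
Qed.

Lemma RE1 : RE 1 = 1.
Proof. by apply: val_inj => /=; apply/Creal_ReP; exact: rpred1. Qed.

Lemma root_bigger (y : algC) (p : nat) (a : algR) : `|y| = 1 ->
  RE y <= a -> a <= 1 -> (Tch p).[a] < RE y ->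
  exists v : algC, v ^+ p = y /\ 'Re y < 'Re v.
Proof.
move=> hy ya a1 ta.
pose P := Tch p - (RE y)%:P.
have t1 : (Tch p).[1] = 1.
  have := tch_val p (normr1 algC); rewrite RE1 expr1n => h.
  apply: val_inj; change (algRval (Tch p).[1] = algRval 1); rewrite h /=.
  by apply/Creal_ReP; exact: rpred1.
have [yl yu] := Re_bounds hy.
have Pa : P.[a] <= 0 by rewrite /P !hornerE subr_le0 ltW.
have P1 : 0 <= P.[1] by rewrite /P !hornerE t1 subr_ge0; exact: yu.
have [x /andP[ax x1] rx] := poly_ivt a1 (introT andP (conj Pa P1)).
have tx : (Tch p).[x] = RE y.
  by move: rx; rewrite /root /P !hornerE subr_eq0 => /eqP.
have yx : RE y < x.
  rewrite lt_def (le_trans ya ax) andbT; apply/eqP=> e.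
  have xa : x = a by apply/eqP; rewrite eq_le ax andbT e.
  by move: ta; rewrite -xa tx ltxx.
have xm1 : -1 <= x by exact (le_trans yl (ltW yx)).
have s0 : 0 <= 1 - algRval x ^+ 2.
  have : 0 <= 1 - x ^+ 2 by nra.
  by [].
pose v := algRval x + 'i * sqrtC (1 - algRval x ^+ 2).
have xR : algRval x \is Num.real by exact: algRvalP.
have sR : sqrtC (1 - algRval x ^+ 2) \is Num.real by exact: sqrtC_real.
have Rev : 'Re v = algRval x by rewrite /v Re_rect.
have Imv : 'Im v = sqrtC (1 - algRval x ^+ 2) by rewrite /v Im_rect.
have hv : `|v| = 1.
  by apply: norm1_sq; rewrite Rev Imv sqrtCK addrC subrK.
have REv : RE v = x by apply: val_inj; change ('Re v = algRval x).
have hvp : `|v ^+ p| = 1 by rewrite normrX hv expr1n.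
have Rvp : 'Re (v ^+ p) = 'Re y.
  by rewrite -tch_val // REv tx.
have [e|e] := unit_eq_or_conj hvp hy Rvp.
  by exists v; split=> //; rewrite Rev.
exists v^*; split.
  by rewrite -rmorphXn e /= conjCK.
by rewrite Re_conj Rev.
Qed.

Lemma Re1C : 'Re (1 : algC) = 1. Proof. by apply/Creal_ReP; exact: rpred1. Qed.
Lemma Im1C : 'Im (1 : algC) = 0. Proof. by apply/Creal_ImP; exact: rpred1. Qed.
Lemma Re_m1 : 'Re (-1 : algC) = -1. Proof. by rewrite raddfN /= Re1C. Qed.
Lemma Im_m1 : 'Im (-1 : algC) = 0. Proof. by rewrite raddfN /= Im1C oppr0. Qed.

Lemma m1_neq1 : (-1 : algC) != 1.
Proof.
apply/eqP => h; have : (2%:R : algC) == 0 by rewrite mulr2n -{1}h addNr.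
by rewrite pnatr_eq0.
Qed.

Definition yy (N : nat) : algC := N.-root (-1).

Lemma yyX N : (0 < N)%N -> yy N ^+ N = -1.
Proof. by move=> N0; rewrite /yy rootCK. Qed.

Lemma normX1 (z : algC) N : (0 < N)%N -> z ^+ N = -1 -> `|z| = 1.
Proof.
move=> N0 h; have : `|z| ^+ N = 1 by rewrite -normrX h normrN1.
by move/eqP; rewrite pexpr_eq1 ?normr_ge0 // => /eqP.
Qed.

Lemma yy_norm N : (0 < N)%N -> `|yy N| = 1.
Proof. by move=> N0; apply: (normX1 N0); exact: yyX. Qed.

Lemma yy_Im N : (1 < N)%N -> 0 <= 'Im (yy N).
Proof. exact: Im_rootC_ge0. Qed.

Lemma yy_max N v : (0 < N)%N -> v ^+ N = -1 -> 'Re v <= 'Re (yy N).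
Proof.
move=> N0 hv.
have [Iv|Iv] := boolP (0 <= 'Im v); first exact: rootC_Re_max.
rewrite -Re_conj; apply: rootC_Re_max => //.
  by rewrite -rmorphXn hv /= rmorphN1.
rewrite Im_conj oppr_ge0.
have : 'Im v < 0 by rewrite real_ltNge ?rpred0 ?Creal_Im.
by move/ltW.
Qed.

Lemma step_pos N : (1 < N)%N -> 0 < 'Im (yy N).
Proof.
move=> N1; have N0 : (0 < N)%N by apply: ltnW.
set y := yy N.
have hy : `|y| = 1 := yy_norm N0.
have hI : 0 <= 'Im y := yy_Im N1.
rewrite lt_def hI andbT; apply/eqP => I0.
have : 'Re y ^+ 2 = 1.
  by move: (normC2_Re_Im y); rewrite hy I0 expr1n expr0n addr0 => <-.
move/eqP; rewrite sqrf_eq1 => /orP[]/eqP Ry.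
  have y1 : y = 1 by rewrite [y]Crect Ry I0 mulr0 addr0.
  by move: (yyX N0); rewrite -/y y1 expr1n => /eqP; rewrite eq_sym (negPf m1_neq1).
have N2 : (0 < N.*2)%N by rewrite double_gt0.
have [w pw] := C_prim_root_exists N2.
have wN : w ^+ N = -1.
  have : (w ^+ N) ^+ 2 = 1 by rewrite -exprM muln2 prim_expr_order.
  move/eqP; rewrite sqrf_eq1 => /orP[]/eqP // e.
  have : (N.*2 %| N)%N by rewrite (prim_order_dvd pw) e.
  move/dvdn_leq => /(_ N0); lia.
have := yy_max N0 wN; rewrite -/y Ry => le.
have w1 : w = -1 := Re_le_m1 (normX1 N0 wN) le.
have : (N.*2 %| 2)%N by rewrite (prim_order_dvd pw) w1 expr2 mulrNN mulr1.
move/dvdn_leq => /(_ isT); lia.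
Qed.

Lemma Im_neg_y (y : algC) : 0 < 'Im y -> 'Im (- y) < 0.
Proof. by move=> h; rewrite raddfN /= oppr_lt0. Qed.

Lemma hard_case N h :
  (forall m, (0 < m)%N -> (m < N)%N ->
      forall k, (0 < k <= m)%N -> 0 <= 'Im (yy m ^+ k)) ->
  (1 < N)%N -> (0 < h)%N -> (h < N)%N -> yy N ^+ h = -1 ->
  (forall j, (0 < j <= h)%N -> 0 <= 'Im (yy N ^+ j)) -> False.
Proof.
move=> IH N1 h0 hN yh mn.
have N0 : (0 < N)%N by apply: ltnW.
set y := yy N in yh mn.
have hy : `|y| = 1 := yy_norm N0.
have Iy : 0 < 'Im y := step_pos N1.
have yN : y ^+ N = -1 := yyX N0.
have hyj j : `|y ^+ j| = 1 by rewrite normrX hy expr1n.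
have no_early j : (0 < j)%N -> (j < h)%N -> y ^+ j != -1.
  move=> j0 jh; apply/eqP => e.
  have := mn j.+1 jh; rewrite exprSr e mulN1r.
  by rewrite real_leNgt ?rpred0 ?Creal_Im // Im_neg_y.
have h1 : (1 < h)%N.
  case: h h0 hN yh mn no_early => [|[|h]] // _ _ yh _ _.
  by move: Iy; rewrite -[y]expr1 yh Im_m1 ltxx.
have y2h : y ^+ (h.*2) = 1 by rewrite -muln2 exprM yh expr2 mulrNN mulr1.
set r := (N %% h.*2)%N.
have yr : y ^+ r = -1 by rewrite /r expr_mod.
have rh : r = h.
  have r2 : (r < h.*2)%N by rewrite /r ltn_pmod // double_gt0.
  case: (ltngtP r h) => // [rlt|rgt].
    case: (posnP r) => [r0|rp].
      by move: yr; rewrite r0 expr0 => /eqP; rewrite eq_sym (negPf m1_neq1).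
    by move: (no_early r rp rlt); rewrite yr eqxx.
  have r2' : (r < h + h)%N by rewrite addnn.
  set d := (r - h)%N.
  have yd : y ^+ d = 1.
    have : y ^+ r = y ^+ d * y ^+ h by rewrite -exprD /d subnK // ltnW.
    rewrite yr yh mulrN1 => /eqP; rewrite eqr_opp => /eqP <-.
    by [].
  have e : y ^+ (h - d) = -1.
    have : y ^+ (h - d) * y ^+ d = y ^+ h by rewrite -exprD subnK // /d; lia.
    by rewrite yd mulr1 yh.
  by move: (no_early (h - d)%N ltac:(rewrite /d; lia) ltac:(rewrite /d; lia)); rewrite e eqxx.
set q := (N %/ h.*2)%N.
have Ne : N = (h * q.*2.+1)%N.
  by rewrite {1}(divn_eq N h.*2) -/q -/r rh; lia.
set t := q.*2.+1.
have todd : odd t by rewrite /t /= odd_double.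
have t1 : (1 < t)%N.
  rewrite /t ltnS double_gt0 lt0n; apply/eqP => q0.
  by move: hN; rewrite Ne q0 muln1 ltnn.
set p := pdiv t.
have pr : prime p := pdiv_prime t1.
have pt : (p %| t)%N := pdiv_dvd t.
set t' := (t %/ p)%N.
have te : t = (p * t')%N by rewrite /t' mulnC divnK.
have t'odd : odd t' by move: todd; rewrite te oddM => /andP[].
have p2 : (2 < p)%N.
  have := prime_gt1 pr; rewrite leq_eqVlt => /orP[/eqP p2|//].
  by move: todd; rewrite te -p2 oddM.
have vN v : v ^+ p = y -> v ^+ N = -1.
  move=> vp; rewrite Ne -/t te mulnCA exprM vp exprM yh.
  by rewrite -signr_odd t'odd expr1.
have pN : (p < N)%N.
  rewrite Ne -/t te; have : (0 < t')%N by case: (t') t'odd.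
  by move=> t'0; nia.
case: (leqP p h) => [ph|hp].
  have dec j : (0 < j)%N -> (j < h)%N -> 'Re (y ^+ j.+1) < 'Re (y ^+ j).
    move=> j0 jh; rewrite exprSr; apply: CL1s => //.
      by apply: mn; rewrite j0 ltnW.
    by rewrite -exprSr; apply: mn.
  have chain j : (1 < j)%N -> (j <= h)%N -> 'Re (y ^+ j) < 'Re y.
    elim: j => [//|j IHj] j1 jh.
    case: (ltngtP j 1) => [j0|jg|je].
      by case: j j0 j1 {IHj jh}=> [|[]].
      apply: lt_trans (dec j _ jh) (IHj jg (ltnW jh)); lia.
    by rewrite je -{2}[y]expr1; apply: dec.
  have [v [vp vy]] : exists v, v ^+ p = y /\ 'Re y < 'Re v.
    apply: (root_bigger (a := RE y)) => //.
      by have [] := Re_bounds hy.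
    have := tch_val p hy => e.
    have := chain p (ltnW p2) ph.
    by rewrite -e.
  have := yy_max N0 (vN v vp); rewrite -/y => le.
  by move: (lt_le_trans vy le); rewrite ltxx.
(* p > h : compare with yy p *)
have p0 : (0 < p)%N by apply: prime_gt0.
have p1 : (1 < p)%N by apply: prime_gt1.
set z := yy p.
have hz : `|z| = 1 := yy_norm p0.
have Iz : 0 < 'Im z := step_pos p1.
have mz := IH p p0 pN.
have hzj j : `|z ^+ j| = 1 by rewrite normrX hz expr1n.
have zp : z ^+ p = -1 := yyX p0.
have yz : 'Re y <= 'Re z.
  rewrite real_leNgt ?Creal_Re //; apply/negP => zy.
  have cmp j : (0 < j)%N -> (j <= h)%N -> 'Re (z ^+ j) <= 'Re (y ^+ j).
    elim: j => [//|j IHj] _ jh.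
    case: (posnP j) => [->|j0]; first by rewrite !expr1 ltW.
    rewrite !exprSr; apply: CPM => //.
    - by apply: mz; rewrite j0 /= ltnW // (leq_trans jh) // ltnW.
    - by apply: mn; rewrite j0 ltnW.
    - exact: ltW.
    - exact: ltW.
    - exact: Re_gt_m1.
    - by apply: Re_gt_m1'; [exact: hyj | apply: no_early].
    - by apply: IHj => //; apply: ltnW.
    - exact: ltW.
    - by rewrite -exprSr; apply: mz => //; rewrite (leq_trans jh) // ltnW.
  have := cmp h h0 (leqnn h); rewrite yh Re_m1 => le.
  have zh : z ^+ h = -1 := Re_le_m1 (hzj h) le.
  have := mz h.+1 hp; rewrite exprSr zh mulN1r.
  by rewrite real_leNgt ?rpred0 ?Creal_Im // Im_neg_y.
have [v [vp vy]] : exists v, v ^+ p = y /\ 'Re y < 'Re v.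
  apply: (root_bigger (a := RE z)) => //.
    by have [] := Re_bounds hz.
  have := tch_val p hz; rewrite zp Re_m1 => e.
  have : -1 < 'Re y := Re_gt_m1 hy Iy.
  by rewrite -e.
have := yy_max N0 (vN v vp); rewrite -/y => le.
by move: (lt_le_trans vy le); rewrite ltxx.
Qed.

Lemma NW N : (0 < N)%N -> forall k, (0 < k <= N)%N -> 0 <= 'Im (yy N ^+ k).
Proof.
elim/ltn_ind: N => N IH N0 k /andP[k0 kN].
case: (leqP N 1) => [N1|N1].
  have -> : N = 1%N by lia.
  have -> : k = 1%N by lia.
  by rewrite expr1 /yy root1C Im_m1.
rewrite real_leNgt ?rpred0 ?Creal_Im //; apply/negP => neg.
have ex : exists k, (0 < k <= N)%N && ('Im (yy N ^+ k) < 0).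
  by exists k; rewrite k0 kN neg.
case: (ex_minnP ex) => {k k0 kN neg} k /andP[/andP[k0 kN] neg] kmin.
set y := yy N in neg kmin *.
have mn j : (0 < j)%N -> (j < k)%N -> 0 <= 'Im (y ^+ j).
  move=> j0 jk; rewrite real_leNgt ?rpred0 ?Creal_Im //; apply/negP => n.
  have := kmin j; rewrite j0 n (ltnW (leq_trans jk kN)) => /(_ isT).
  by rewrite leqNgt jk.
have hy : `|y| = 1 := yy_norm N0.
have Iy : 0 < 'Im y := step_pos N1.
have yN : y ^+ N = -1 := yyX N0.
have k1 : (1 < k)%N.
  case: k k0 {kN kmin mn} neg => [|[|]] //= _.
  by rewrite expr1 => neg; move: (lt_trans neg Iy); rewrite ltxx.
set b := y ^+ k.-1.
have yk : y ^+ k = b * y by rewrite /b -exprSr prednK // ltnW.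
have hb : `|b| = 1 by rewrite normrX hy expr1n.
have Ib : 0 <= 'Im b by apply: mn; lia.
case: (eqVneq b (-1)) => [bm1|bn1].
  apply: (hard_case (N := N) (h := k.-1)) => //.
  - by move=> m m0 mN; apply: IH.
  - lia.
  - lia.
  - by move=> j /andP[j0 jk]; apply: mn => //; lia.
move: neg; rewrite yk => neg.
have [w1 w2] := CW hb hy Ib Iy neg bn1.
case: (boolP (odd (N + k))) => par.
  have uN : (- (y ^+ k)) ^+ N = -1.
    rewrite exprNn -exprM mulnC exprM yN -exprD.
    by rewrite -signr_odd par expr1.
  have := yy_max N0 uN; rewrite -/y raddfN /= yk => le.
  by move: (lt_le_trans w2 le); rewrite ltxx.
have uN : (- (b^*)) ^+ N = -1.
  rewrite exprNn -rmorphXn /b -exprM mulnC exprM yN /= rmorph_sign -exprD.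
  rewrite -signr_odd.
  have -> : odd (N + k.-1) by move: par; rewrite -{1}(prednK (ltnW k1)) addnS /= negbK.
  by rewrite expr1.
have := yy_max N0 uN; rewrite -/y raddfN /= Re_conj => le.
by move: (lt_le_trans w1 le); rewrite ltxx.
Qed.

Lemma yy_prim N : (0 < N)%N -> (N.*2).-primitive_root (yy N).
Proof.
move=> N0; set y := yy N.
have yN : y ^+ N = -1 := yyX N0.
have y2 : y ^+ N.*2 = 1 by rewrite -muln2 exprM yN expr2 mulrNN mulr1.
have N2 : (0 < N.*2)%N by rewrite double_gt0.
have [d pd dd] := prim_order_exists N2 y2.
have d0 : (0 < d)%N := prim_order_gt0 pd.
suff -> : N.*2 = d by [].
apply/eqP; rewrite eqn_leq (dvdn_leq N2 dd) andbT.
rewrite leqNgt; apply/negP => dlt.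
have dN : (d <= N)%N.
  have [e de] : exists e, N.*2 = (e * d)%N by exists (N.*2 %/ d)%N; rewrite divnK.
  have e2 : (2 <= e)%N.
    case: e de => [|[|e]] de //; first by move: N2; rewrite de.
    by move: dlt; rewrite de mul1n ltnn.
  have : (2 * d <= N.*2)%N by rewrite de leq_mul2r e2 orbT.
  by rewrite -muln2 mulnC leq_mul2r /=.
have yd : y ^+ d = 1 := prim_expr_order pd.
set r := (N %% d)%N.
have yr : y ^+ r = -1 by rewrite /r (expr_mod _ yd).
case: (posnP r) => [r0|rp].
  by move: yr; rewrite r0 expr0 => /eqP; rewrite eq_sym (negPf m1_neq1).
have rd : (r < d)%N by rewrite /r ltn_pmod.
have N1 : (1 < N)%N by lia.
have := NW N0 (k := r.+1) ltac:(lia).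
rewrite exprSr -/y yr mulN1r real_leNgt ?rpred0 ?Creal_Im // Im_neg_y //.
exact: step_pos.
Qed.

Lemma zeta_prim N : (0 < N)%N -> N.-primitive_root ((N.-root (-1 : algC)) ^+ 2).
Proof.
move=> N0; have := exp_prim_root (yy_prim N0) 2.
have -> : gcdn 2 N.*2 = 2%N by rewrite -muln2 gcdnMl.
by rewrite -muln2 mulnK.
Qed.

Definition Qn (n j : nat) := forall d, (1 < d)%N -> (d %| j)%N -> ~~ udvdn d n.

Lemma udvdn1 n : udvdn 1 n.
Proof. by rewrite /udvdn dvd1n coprime1n. Qed.

Lemma udvdn_dvd d n : udvdn d n -> (d %| n)%N.
Proof. by case/andP. Qed.

Lemma ugcdn1P n j : (0 < n)%N -> reflect (Qn n j) (ugcdn j n == 1%N).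
Proof.
move=> n0; rewrite /ugcdn.
have ge1 : (1 <= \max_(d < n.+1 | (d %| j)%N && udvdn d n) (nat_of_ord d))%N.
  have := @leq_bigmax_cond _ (fun d : 'I_n.+1 => (d %| j)%N && udvdn d n)
            (fun d => nat_of_ord d) (@Ordinal n.+1 1 n0) ltac:(by rewrite /= dvd1n udvdn1).
  by [].
rewrite eqn_leq ge1 andbT.
apply: (iffP (bigmax_leqP _ _ _)) => [H d d1 dj|H d /andP[dj ud]].
  apply/negP => ud.
  have dn : (d < n.+1)%N by rewrite ltnS dvdn_leq // udvdn_dvd.
  by have := H (Ordinal dn); rewrite /= dj ud leqNgt d1 => /(_ isT).
rewrite leqNgt; apply/negP => d1.
by move: (H d d1 dj); rewrite ud.
Qed.

Lemma Qn_split p e m j : prime p -> (0 < e)%N -> coprime (p ^ e) m -> (0 < m)%N ->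
  Qn (p ^ e * m) j <-> ~~ (p ^ e %| j)%N /\ Qn m j.
Proof.
move=> pr e0 cqm m0; set q := (p ^ e)%N.
have q1 : (1 < q)%N by rewrite /q -(exp1n e) ltn_exp2r // prime_gt1.
have q0 : (0 < q)%N by apply: ltnW.
split.
  move=> H; split.
    apply/negP => qj; move: (H q q1 qj); rewrite /udvdn dvdn_mulr //.
    by rewrite mulKn // cqm.
  move=> d d1 dj; apply: contraNN (H d d1 dj) => /andP[dm cd].
  rewrite /udvdn dvdn_mull //=.
  rewrite -muln_divA // coprimeMr cd andbT.
  by apply: coprime_dvdl dm _; rewrite coprime_sym.
move=> [nqj H] d d1 dj; apply/negP => /andP[dn cd].
have [pd|npd] := boolP (p %| d)%N.
  have cpn : coprime p (q * m %/ d) by apply: coprime_dvdl pd cd.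
  have cqn : coprime q (q * m %/ d) by rewrite /q coprimeXl.
  have qd : (q %| d)%N.
    by rewrite -(Gauss_dvdl _ cqn) mulnC divnK // dvdn_mulr.
  by move: nqj; rewrite (dvdn_trans qd dj).
have cdq : coprime d q.
  by rewrite coprime_sym /q coprimeXl // prime_coprime.
have dm : (d %| m)%N by rewrite -(Gauss_dvdr _ cdq).
move: (H d d1 dj); rewrite /udvdn dm /=.
by move: cd; rewrite -muln_divA // coprimeMr => /andP[_ ->].
Qed.

Lemma Qn_periodic m k i : Qn m (k + i * m) <-> Qn m k.
Proof.
split=> H d d1 dk; apply/negP => ud; have dm := udvdn_dvd ud.
  by move: (H d d1 ltac:(by rewrite dvdn_addl // dvdn_mull)); rewrite ud.
by move: (H d d1 ltac:(by rewrite -(dvdn_addl _ (dvdn_mull i dm)))); rewrite ud.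
Qed.

Lemma Qn_mulq q m j : coprime q m -> Qn m (q * j) <-> Qn m j.
Proof.
move=> cqm; split=> H d d1 dj; apply/negP => ud; have dm := udvdn_dvd ud.
  by move: (H d d1 ltac:(by rewrite dvdn_mull)); rewrite ud.
have cdq : coprime d q by apply: coprime_dvdl dm _; rewrite coprime_sym.
by move: (H d d1 ltac:(by rewrite -(Gauss_dvdr _ cdq))); rewrite ud.
Qed.

Lemma Qn_1 j : Qn 1 j.
Proof.
move=> d d1 _; apply/negP => /udvdn_dvd /dvdn_leq => /(_ isT) h.
by move: d1; rewrite ltnNge h.
Qed.

Lemma S_split p e m j : prime p -> (0 < e)%N -> coprime (p ^ e) m -> (0 < m)%N ->
  (ugcdn j (p ^ e * m) == 1%N) = ~~ (p ^ e %| j)%N && (ugcdn j m == 1%N).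
Proof.
move=> pr e0 cqm m0.
have n0 : (0 < p ^ e * m)%N by rewrite muln_gt0 expn_gt0 prime_gt0.
apply/(ugcdn1P _ n0)/andP.
  by move/(Qn_split j pr e0 cqm m0) => [h1 h2]; split=> //; apply/(ugcdn1P _ m0).
move=> [h1 /(ugcdn1P _ m0) h2]; exact/(Qn_split j pr e0 cqm m0).
Qed.

Lemma S_periodic m k i : (0 < m)%N ->
  (ugcdn (k + i * m) m == 1%N) = (ugcdn k m == 1%N).
Proof.
move=> m0; have := Qn_periodic m k i => -[h1 h2].
by apply/idP/idP => /(ugcdn1P _ m0) h; apply/(ugcdn1P _ m0); [exact: h1|exact: h2].
Qed.

Lemma S_mulq q m j : (0 < m)%N -> coprime q m ->
  (ugcdn (q * j) m == 1%N) = (ugcdn j m == 1%N).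
Proof.
move=> m0 c; have := Qn_mulq j c => -[h1 h2].
by apply/idP/idP => /(ugcdn1P _ m0) h; apply/(ugcdn1P _ m0); [exact: h1|exact: h2].
Qed.


Lemma S_one j : ugcdn j 1 == 1%N.
Proof. by apply/(@ugcdn1P 1 j isT); exact: Qn_1. Qed.

Lemma RIX (g : nat -> algC) q m :
  \prod_(1 <= j < (q * m).+1) g j = \prod_(i < q) \prod_(1 <= k < m.+1) g (k + i * m)%N.
Proof.
elim: q => [|q IH]; first by rewrite mul0n big_ord0 big_geq.
rewrite big_ord_recr /= -IH mulSn addnC.
rewrite (big_cat_nat _ (n := (q * m).+1)) //=; last by rewrite ltnS leq_addr.
congr (_ * _).
rewrite -[(q * m).+1]add1n big_addn.
by rewrite -addnS addKn.
Qed.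

Lemma MULT (g : nat -> algC) q m : (0 < q)%N ->
  \prod_(1 <= j < (q * m).+1 | (q %| j)%N) g j = \prod_(1 <= j < m.+1) g (q * j)%N.
Proof.
move=> q0; elim: m => [|m IH]; first by rewrite muln0 !big_geq.
rewrite mulnS addnC (big_cat_nat _ (n := (q * m).+1)) //=; last by rewrite ltnS leq_addr.
rewrite IH [in RHS]big_nat_recr //=; congr (_ * _).
rewrite big_mkcond big_nat_recr /=; last by lia.
have -> : (q %| q * m + q)%N by rewrite dvdn_add ?dvdn_mulr.
rewrite -mulnSr.
rewrite big_nat_cond big1 ?mul1r // => j /andP[/andP[jl jr] _].
case: ifP => // qj; exfalso.
have jm : j = (q * m + (j - q * m))%N by rewrite subnKC // ltnW.
move: qj; rewrite jm dvdn_addr ?dvdn_mulr // => /dvdn_leq.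
have r0 : (0 < j - q * m)%N by rewrite subn_gt0.
move=> /(_ r0); rewrite leqNgt; apply/negP/negPn.
by move: jr; rewrite mulnSr; lia.
Qed.

Lemma FAC (z : algC) q m k x : (0 < q)%N -> (0 < m)%N -> (q * m).-primitive_root z ->
  x ^+ q - (z ^+ q) ^+ k = \prod_(i < q) (x - z ^+ (k + i * m)).
Proof.
move=> q0 m0 pz.
have pe : q.-primitive_root (z ^+ m).
  by have := dvdn_prim_root pz (dvdn_mulr m (dvdnn q)); rewrite mulKn.
have z0 : z != 0 by rewrite (prim_root_eq0 pz) muln_eq0 negb_or -!lt0n q0 m0.
set a := z ^+ k.
have a0 : a != 0 by rewrite expf_neq0.
have hx : \prod_(i < q) (x / a - (z ^+ m) ^+ i) = (x / a) ^+ q - 1.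
  have := congr1 (fun P => P.[x / a]) (factor_Xn_sub_1 pe).
  rewrite /= horner_prod big_mkord.
  have e2 : \prod_(i < q) ('X - ((z ^+ m) ^+ i)%:P).[x / a] =
            \prod_(i < q) (x / a - (z ^+ m) ^+ i).
    by apply: eq_bigr => i _; rewrite hornerXsubC.
  by rewrite e2 => ->; rewrite !hornerE.
symmetry.
rewrite (eq_bigr (fun i : 'I_q => a * (x / a - (z ^+ m) ^+ i))); last first.
  move=> i _; rewrite mulrBr [a * (x / a)]mulrC divfK // /a -exprM -exprD.
  by rewrite mulnC.
rewrite big_split /= prodr_const card_ord hx mulrBr mulr1 -exprMn.
by rewrite [a * (x / a)]mulrC divfK // /a exprAC.
Qed.

Definition Gp (n : nat) (z : algC) : {poly algC} :=
  \prod_(1 <= j < n.+1 | ugcdn j n == 1%N) ('X - (z ^+ j)%:P).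
Definition Gv (n : nat) (z x : algC) : algC :=
  \prod_(1 <= j < n.+1 | ugcdn j n == 1%N) (x - z ^+ j).

Lemma uPhiE n : uPhi n = Gp n (zeta n). Proof. by []. Qed.

Lemma GpE n z x : (Gp n z).[x] = Gv n z x.
Proof. by rewrite /Gp horner_prod; apply: eq_bigr => j _; rewrite hornerXsubC. Qed.

Lemma REL p e m (z x : algC) : prime p -> (0 < e)%N -> coprime (p ^ e) m -> (0 < m)%N ->
  (p ^ e * m).-primitive_root z ->
  Gv (p ^ e * m) z x * Gv m (z ^+ (p ^ e)) x = Gv m (z ^+ (p ^ e)) (x ^+ (p ^ e)).
Proof.
move=> pr e0 cqm m0 pz.
set q := (p ^ e)%N.
have q0 : (0 < q)%N by rewrite expn_gt0 prime_gt0.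
set w := z ^+ q.
have R : Gv m w (x ^+ q) =
    \prod_(1 <= j < (q * m).+1) (if ugcdn j m == 1%N then x - z ^+ j else 1).
  rewrite /Gv big_mkcond RIX.
  rewrite (eq_bigr (fun i : 'I_q => \prod_(1 <= k < m.+1)
             (if ugcdn k m == 1%N then x - z ^+ (k + i * m) else 1))); last first.
    by move=> i _; apply: eq_bigr => k _; rewrite S_periodic.
  rewrite exchange_big /=; apply: eq_bigr => k _.
  case: ifP => _; last by rewrite big1.
  by rewrite /w (FAC _ _ q0 m0 pz).
have L : \prod_(1 <= j < (q * m).+1) (if ugcdn j m == 1%N then x - z ^+ j else 1) =
    Gv m w x * Gv (q * m) z x.
  rewrite (bigID (fun j => (q %| j)%N)) /=; congr (_ * _).
    rewrite MULT // /Gv [RHS]big_mkcond; apply: eq_bigr => j _.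
    by rewrite S_mulq // /w exprM.
  rewrite /Gv -big_mkcondr; apply: eq_bigl => j.
  by rewrite (S_split _ pr e0 cqm m0) andbC.
by rewrite R L mulrC.
Qed.

Lemma prim_w (z : algC) q m : (0 < q)%N -> (q * m).-primitive_root z -> m.-primitive_root (z ^+ q).
Proof.
move=> q0 pz; have m0 : (0 < m)%N.
  by have := prim_order_gt0 pz; rewrite muln_gt0 => /andP[].
by have := dvdn_prim_root pz (dvdn_mull q (dvdnn m)); rewrite mulnK.
Qed.

Lemma Gv1 (z x : algC) : 1.-primitive_root z -> Gv 1 z x = x - 1.
Proof.
move=> pz; have z1 : z = 1 by have := prim_expr_order pz; rewrite expr1.
by rewrite /Gv big_mkcond big_nat1 S_one z1 expr1.
Qed.

Lemma decomp n p : (0 < n)%N -> prime p -> (p %| n)%N ->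
  exists m, [/\ coprime (p ^ logn p n) m, n = (p ^ logn p n * m)%N,
               (0 < m)%N & (0 < logn p n)%N].
Proof.
move=> n0 pr pn.
have [m cpm nm] := pfactor_coprime pr n0.
exists m; split.
- by rewrite coprimeXl.
- by rewrite mulnC.
- by move: n0; rewrite nm muln_gt0 => /andP[].
- by rewrite logn_gt0 mem_primes pr n0 pn.
Qed.

Lemma Gv_pp1 p e (z : algC) : prime p -> (0 < e)%N -> (p ^ e).-primitive_root z ->
  Gv (p ^ e) z 1 = (p ^ e)%:R.
Proof.
move=> pr e0 pz; set q := (p ^ e)%N.
have q0 : (0 < q)%N by rewrite expn_gt0 prime_gt0.
have Gq : Gp q z = \prod_(1 <= j < q) ('X - (z ^+ j)%:P).
  rewrite /Gp big_mkcond big_nat_recr //=.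
  have -> : (ugcdn q q == 1%N) = false.
    by have := S_split q pr e0 (coprimen1 _) isT; rewrite muln1 dvdnn.
  rewrite mulr1 [RHS]big_mkcond; apply: eq_big_nat => j /andP[j1 jq].
  have := S_split j pr e0 (coprimen1 _) isT; rewrite muln1 S_one andbT => ->.
  suff -> : ~~ (p ^ e %| j)%N by [].
  by apply/negP => /(dvdn_leq j1); rewrite leqNgt jq.
have h1 : ('X - 1) * Gp q z = ('X - 1) * \sum_(i < q) 'X ^+ i.
  rewrite -subrX1 -(factor_Xn_sub_1 pz) (big_ltn q0) expr0 Gq.
  by [].
have nz : ('X - 1 : {poly algC}) != 0 by rewrite -polyC1 polyXsubC_eq0.
have h2 := mulfI nz h1.
rewrite -GpE h2 horner_sum.
rewrite (eq_bigr (fun _ => 1)); last by move=> i _; rewrite hornerXn expr1n.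
by rewrite sumr_const card_ord.
Qed.

Lemma qgt1 p e : prime p -> (0 < e)%N -> (1 < p ^ e)%N.
Proof. by move=> pr e0; rewrite -(exp1n e) ltn_exp2r // prime_gt1. Qed.

Lemma Godd m : (0 < m)%N -> odd m -> forall z : algC, m.-primitive_root z ->
  Gv m z (-1) = if m == 1%N then -2 else 1.
Proof.
elim/ltn_ind: m => m IH m0 mo z pz.
case: (eqVneq m 1%N) => [m1|m1].
  by subst; rewrite Gv1 //; ring.
have m1' : (1 < m)%N by rewrite ltn_neqAle eq_sym m1 m0.
have pr := pdiv_prime m1'.
have [m' [cq me m'0 e0]] := decomp m0 pr (pdiv_dvd m).
move: (logn _ _) cq me e0 => e cq me e0.
move: (pdiv m) pr cq me e0 => p pr cq me e0.
subst m.
have q1 := qgt1 pr e0.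
have [oq om'] : odd (p ^ e) /\ odd m' by move: mo; rewrite oddM => /andP[].
have lt : (m' < p ^ e * m')%N by rewrite ltn_Pmull.
have rel := REL (-1) pr e0 cq m'0 pz.
rewrite -signr_odd oq expr1 in rel.
have := IH m' lt m'0 om' _ (prim_w (ltnW q1) pz) => hv.
have nz : Gv m' (z ^+ (p ^ e)) (-1) != 0.
  rewrite hv; case: ifP => _; last exact: oner_neq0.
  by rewrite oppr_eq0 pnatr_eq0.
by apply: (mulIf nz); rewrite mul1r.
Qed.

Lemma G1_nz m : (1 < m)%N -> forall z : algC, m.-primitive_root z -> Gv m z 1 != 0.
Proof.
elim/ltn_ind: m => m IH m1 z pz.
have m0 : (0 < m)%N by apply: ltnW.
have pr := pdiv_prime m1.
have [m' [cq me m'0 e0]] := decomp m0 pr (pdiv_dvd m).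
move: (logn _ _) cq me e0 => e cq me e0.
move: (pdiv m) pr cq me e0 => p pr cq me e0.
subst m.
have q1 := qgt1 pr e0.
case: (eqVneq m' 1%N) => [m'1|m'1].
  subst; rewrite muln1 in pz *; rewrite Gv_pp1 // pnatr_eq0 -lt0n.
  exact: ltnW.
have m'1' : (1 < m')%N by rewrite ltn_neqAle eq_sym m'1 m'0.
have lt : (m' < p ^ e * m')%N by rewrite ltn_Pmull.
have rel := REL 1 pr e0 cq m'0 pz.
rewrite expr1n in rel.
have nz := IH m' lt m'1' _ (prim_w (ltnW q1) pz).
have -> : Gv (p ^ e * m') z 1 = 1 by apply: (mulIf nz); rewrite mul1r.
exact: oner_neq0.
Qed.

Lemma G1_np m : (1 < m)%N -> (forall p b, prime p -> m <> (p ^ b)%N) ->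
  forall z : algC, m.-primitive_root z -> Gv m z 1 = 1.
Proof.
move=> m1 npp z pz.
have m0 : (0 < m)%N by apply: ltnW.
have pr := pdiv_prime m1.
have [m' [cq me m'0 e0]] := decomp m0 pr (pdiv_dvd m).
move: (logn _ _) cq me e0 => e cq me e0.
move: (pdiv m) pr cq me e0 => p pr cq me e0.
subst m.
have q1 := qgt1 pr e0.
case: (eqVneq m' 1%N) => [m'1|m'1].
  by subst; exfalso; apply: (npp p e pr); rewrite muln1.
have m'1' : (1 < m')%N by rewrite ltn_neqAle eq_sym m'1 m'0.
have rel := REL 1 pr e0 cq m'0 pz.
rewrite expr1n in rel.
have nz := G1_nz m'1' (prim_w (ltnW q1) pz).
by apply: (mulIf nz); rewrite mul1r.
Qed.


Lemma m2_neq0 : (-2 : algC) != 0.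
Proof. by rewrite oppr_eq0 pnatr_eq0. Qed.

Lemma sign_even a : (0 < a)%N -> (-1 : algC) ^+ (2 ^ a) = 1.
Proof. by move=> a0; rewrite -signr_odd oddX /= orbF; case: a a0. Qed.

Theorem lemma4p3 (n : nat) (hn : (0 < n)%N) :
  [/\ (n = 1%N -> (uPhi n).[-1] = -2),
      (forall a : nat, (1 <= a)%N -> n = (2 ^ a)%N -> (uPhi n).[-1] = 0),
      (forall a p b : nat, prime p -> odd p -> (1 <= a)%N -> (1 <= b)%N ->
          n = (2 ^ a * p ^ b)%N -> (uPhi n).[-1] = (p ^ b)%:R)
    & (n <> 1%N ->
       (forall a : nat, (1 <= a)%N -> n <> (2 ^ a)%N) ->
       (forall a p b : nat, prime p -> odd p -> (1 <= a)%N -> (1 <= b)%N ->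
          n <> (2 ^ a * p ^ b)%N) ->
       (uPhi n).[-1] = 1)].
Proof.
have pz : n.-primitive_root (zeta n) by exact: zeta_prim hn.
rewrite uPhiE GpE.
move: (zeta n) pz => z pz.
have pr2 : prime 2 by [].
split.
- by move=> n1; subst; rewrite Gv1 //; ring.
- move=> a a1 na; subst n.
  have pz' : (2 ^ a * 1).-primitive_root z by rewrite muln1.
  have rel := REL (-1) pr2 a1 (coprimen1 _) isT pz'.
  have pw : 1.-primitive_root (z ^+ (2 ^ a)) := prim_w (expn_gt0 2 a) pz'.
  rewrite sign_even // !(Gv1 _ pw) muln1 in rel.
  rewrite subrr in rel.
  have : Gv (2 ^ a) z (-1) * (-2) = 0 by rewrite -rel; congr (_ * _); ring.
  by move/eqP; rewrite mulf_eq0 (negPf m2_neq0) orbF => /eqP.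
- move=> a p b pr po a1 b1 ne; subst n.
  have cq : coprime (2 ^ a) (p ^ b).
    by rewrite coprimeXl // coprimeXr // prime_coprime // dvdn2 po.
  have pb0 : (0 < p ^ b)%N by rewrite expn_gt0 prime_gt0.
  have rel := REL (-1) pr2 a1 cq pb0 pz.
  have pw := prim_w (expn_gt0 2 a) pz.
  have opb : odd (p ^ b) by rewrite oddX po orbT.
  rewrite sign_even // Gv_pp1 // (Godd pb0 opb pw) in rel.
  move: rel; case: ifP => [/eqP h|_]; first by move: (qgt1 pr b1); rewrite h.
  by rewrite mulr1.
- move=> n1 npow npp.
  case: (boolP (odd n)) => on.
    by rewrite Godd // (negPf (introN eqP n1)).
  have d2 : (2 %| n)%N by rewrite dvdn2.
  have [m [cq ne m0 e0]] := decomp hn pr2 d2.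
  move: (logn 2 n) cq ne e0 => a cq ne a0; subst n.
  have om : odd m.
    by move: cq; rewrite coprime_pexpl // prime_coprime // dvdn2 negbK.
  have m1 : m != 1%N.
    by apply/eqP => m1; subst; apply: (npow a a0); rewrite muln1.
  have m1' : (1 < m)%N by rewrite ltn_neqAle eq_sym m1 m0.
  have npm : forall p b, prime p -> m <> (p ^ b)%N.
    move=> p b pr mpb; case: (posnP b) => [b0|b0].
      by move: m1; rewrite mpb b0 expn0 eqxx.
    have op : odd p by move: om; rewrite mpb oddX (gtn_eqF b0).
    by apply: (npp a p b pr op a0 b0); rewrite mpb.
  have rel := REL (-1) pr2 a0 cq m0 pz.
  have pw := prim_w (expn_gt0 2 a) pz.
  rewrite sign_even // (G1_np m1' npm pw) (Godd m0 om pw) (negPf m1) in rel.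
  by rewrite mulr1 in rel.
Qed.
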